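(* Let $f,g\in\mathbb{H}$ be linearly independent pure unit quaternions, $h\in L^1(\mathbb{R}^2,\mathbb{H})$, $h_{\pm}=\frac12(h\pm fhg)$, and $$\mathcal{F}_D^{f,g}\{h\}(\boldsymbol{\omega})=\int_{\mathbb{R}^2}e^{-f\frac12(x_1\omega_1+x_2\omega_2)}\,h(\mathbf{x})\,e^{-g\frac12(x_1\omega_1-x_2\omega_2)}\,d^2\mathbf{x}.$$ Writing $\mathcal{F}^{f,g}_{D\pm}\{h\}=\mathcal{F}^{f,g}_{D}\{h_{\pm}\}$, one has $$\mathcal{F}^{f,g}_{D+}\{h\}=\int_{\mathbb{R}^2}h_+(\mathbf{x})e^{g x_2\omega_2}d^2\mathbf{x}=\int_{\mathbb{R}^2}e^{-f x_2\omega_2}h_+(\mathbf{x})d^2\mathbf{x},\quad \mathcal{F}^{f,g}_{D-}\{h\}=\int_{\mathbb{R}^2}h_-(\mathbf{x})e^{-g x_1\omega_1}d^2\mathbf{x}=\int_{\mathbb{R}^2}e^{-f x_1\omega_1}h_-(\mathbf{x})d^2\mathbf{x}.$$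
   Context: $\mathbb{H}$ is the real quaternion algebra; a pure unit quaternion $f$ satisfies $f^2=-1$, and $e^{\alpha f}=\cos\alpha+f\sin\alpha$. $d^2\mathbf{x}=dx_1dx_2$. *)

(* Defs.v *)
From mathcomp Require Import all_boot all_order all_algebra.
From mathcomp Require Import all_classical all_reals all_analysis.
Set Implicit Arguments. Unset Strict Implicit. Unset Printing Implicit Defensive.
Import Order.TTheory GRing.Theory Num.Theory.
Local Open Scope ring_scope.

(* Real quaternions a + b i + c j + d k *)
Record quat (R : realType) := Quat { q0 : R; q1 : R; q2 : R; q3 : R }.

Section Quat.
Variable R : realType.
Definition qadd (p q : quat R) : quat R :=
  Quat (q0 p + q0 q) (q1 p + q1 q) (q2 p + q2 q) (q3 p + q3 q).
Definition qscale (a : R) (q : quat R) : quat R :=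
  Quat (a * q0 q) (a * q1 q) (a * q2 q) (a * q3 q).
Definition qzero : quat R := Quat 0 0 0 0.
Definition qone : quat R := Quat 1 0 0 0.
Definition qmul (p q : quat R) : quat R :=
  Quat (q0 p * q0 q - q1 p * q1 q - q2 p * q2 q - q3 p * q3 q)
       (q0 p * q1 q + q1 p * q0 q + q2 p * q3 q - q3 p * q2 q)
       (q0 p * q2 q - q1 p * q3 q + q2 p * q0 q + q3 p * q1 q)
       (q0 p * q3 q + q1 p * q2 q - q2 p * q1 q + q3 p * q0 q).
(* pure unit quaternion: zero scalar part, norm 1 (equivalently f^2 = -1) *)
Definition pure_unit (f : quat R) : Prop :=
  q0 f = 0 /\ q1 f ^+ 2 + q2 f ^+ 2 + q3 f ^+ 2 = 1.
Definition lin_indep (f g : quat R) : Prop :=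
  forall a b : R, qadd (qscale a f) (qscale b g) = qzero -> a = 0 /\ b = 0.
Definition qexp (f : quat R) (alpha : R) : quat R :=
  qadd (qscale (cos alpha) qone) (qscale (sin alpha) f).

Definition leb2 := ((@lebesgue_measure R) \x (@lebesgue_measure R))%E.

(* h in L^1(R^2, H): every real component is Lebesgue integrable on R^2 *)
Definition qL1 (h : R * R -> quat R) : Prop :=
  [/\ leb2.-integrable setT (fun x => (q0 (h x))%:E),
      leb2.-integrable setT (fun x => (q1 (h x))%:E),
      leb2.-integrable setT (fun x => (q2 (h x))%:E) &
      leb2.-integrable setT (fun x => (q3 (h x))%:E)].

Definition qint (F : R * R -> quat R) : quat R :=
  Quat (Rintegral leb2 setT (fun x => q0 (F x)))
       (Rintegral leb2 setT (fun x => q1 (F x)))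
       (Rintegral leb2 setT (fun x => q2 (F x)))
       (Rintegral leb2 setT (fun x => q3 (F x))).

Definition hplus (f g : quat R) (h : R * R -> quat R) (x : R * R) : quat R :=
  qscale (1/2) (qadd (h x) (qmul (qmul f (h x)) g)).
Definition hminus (f g : quat R) (h : R * R -> quat R) (x : R * R) : quat R :=
  qscale (1/2) (qadd (h x) (qscale (-1) (qmul (qmul f (h x)) g))).

Definition FD (f g : quat R) (h : R * R -> quat R) (w : R * R) : quat R :=
  qint (fun x => qmul (qmul (qexp f (- ((x.1 * w.1 + x.2 * w.2) / 2))) (h x))
                      (qexp g (- ((x.1 * w.1 - x.2 * w.2) / 2)))).
End Quat.

(* Main.v *)
Require Import Defs.
From mathcomp Require Import all_boot all_order all_algebra.
From mathcomp Require Import all_classical all_reals all_analysis.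
From mathcomp Require Import ring.
Import Order.TTheory GRing.Theory Num.Theory.
Local Open Scope ring_scope.

Ltac qdes := repeat match goal with q : quat _ |- _ => destruct q end;
  rewrite /qmul /qadd /qscale /qexp /qone /=.

Section H.
Variable R : realType.
Implicit Types p q r f g : quat R.



Lemma qmulA p q r : qmul (qmul p q) r = qmul p (qmul q r).
Proof. qdes; congr Quat; ring. Qed.

Lemma Lleft f q t : qmul (qexp f t) q = qadd (qscale (cos t) q) (qscale (sin t) (qmul f q)).
Proof. qdes; congr Quat; ring. Qed.

Lemma Lright g q t : qmul q (qexp g t) = qadd (qscale (cos t) q) (qscale (sin t) (qmul q g)).
Proof. qdes; congr Quat; ring. Qed.

Lemma Ladd g s t : pure_unit g -> qmul (qexp g s) (qexp g t) = qexp g (s + t).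
Proof.
case: g => a b c d [/= -> Hn].
have E : qmul (qexp (Quat 0 b c d) s) (qexp (Quat 0 b c d) t) =
  qadd (qscale (cos s * cos t - sin s * sin t * (b ^+ 2 + c ^+ 2 + d ^+ 2)) (qone R))
       (qscale (cos s * sin t + sin s * cos t) (Quat 0 b c d)).
  rewrite /qmul /qadd /qscale /qexp /qone /=; congr Quat; ring.
by rewrite E Hn mulr1 /qexp cosD sinD; congr (qadd _ (qscale _ _)); ring.
Qed.

Lemma ffp f p : pure_unit f -> qmul f (qmul f p) = qscale (-1) p.
Proof.
case: f => a b c d [/= -> Hn].
have E : qmul (Quat 0 b c d) (qmul (Quat 0 b c d) p) = qscale (-(b ^+ 2 + c ^+ 2 + d ^+ 2)) p.
  qdes; congr Quat; ring.
by rewrite E Hn.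
Qed.

Lemma pgg g p : pure_unit g -> qmul (qmul p g) g = qscale (-1) p.
Proof.
case: g => a b c d [/= -> Hn].
have E : qmul (qmul p (Quat 0 b c d)) (Quat 0 b c d) = qscale (-(b ^+ 2 + c ^+ 2 + d ^+ 2)) p.
  qdes; congr Quat; ring.
by rewrite E Hn.
Qed.

Lemma qmulZl a p q : qmul (qscale a p) q = qscale a (qmul p q).
Proof. qdes; congr Quat; ring. Qed.
Lemma qmulZr a p q : qmul p (qscale a q) = qscale a (qmul p q).
Proof. qdes; congr Quat; ring. Qed.
Lemma qmulDl p q r : qmul (qadd p q) r = qadd (qmul p r) (qmul q r).
Proof. qdes; congr Quat; ring. Qed.
Lemma qmulDr p q r : qmul p (qadd q r) = qadd (qmul p q) (qmul p r).
Proof. qdes; congr Quat; ring. Qed.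

Lemma Kplus f g h : pure_unit f -> pure_unit g ->
  qmul f (qscale (1/2) (qadd h (qmul (qmul f h) g))) =
  qscale (-1) (qmul (qscale (1/2) (qadd h (qmul (qmul f h) g))) g).
Proof.
move=> Hf Hg.
rewrite qmulZr qmulDr -qmulA ffp // qmulZl.
rewrite qmulZl qmulDl pgg //.
move: (qmul f h) (qmul h g) => X Y; qdes; congr Quat; ring.
Qed.

Lemma Kminus f g h : pure_unit f -> pure_unit g ->
  qmul f (qscale (1/2) (qadd h (qscale (-1) (qmul (qmul f h) g)))) =
  qmul (qscale (1/2) (qadd h (qscale (-1) (qmul (qmul f h) g)))) g.
Proof.
move=> Hf Hg.
rewrite qmulZr qmulDr qmulZr -qmulA ffp // qmulZl.
rewrite qmulZl qmulDl qmulZl pgg //.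
move: (qmul f h) (qmul h g) => X Y; qdes; congr Quat; ring.
Qed.

End H.

Theorem mainTheorem6 (R : realType) (f g : quat R) (h : R * R -> quat R) :
  pure_unit f -> pure_unit g -> lin_indep f g -> qL1 h ->
  forall w : R * R,
    [/\ FD f g (hplus f g h) w
          = qint (fun x => qmul (hplus f g h x) (qexp g (x.2 * w.2))),
        FD f g (hplus f g h) w
          = qint (fun x => qmul (qexp f (- (x.2 * w.2))) (hplus f g h x)),
        FD f g (hminus f g h) w
          = qint (fun x => qmul (hminus f g h x) (qexp g (- (x.1 * w.1)))) &
        FD f g (hminus f g h) w
          = qint (fun x => qmul (qexp f (- (x.1 * w.1))) (hminus f g h x))].
Proof.
move=> Hf Hg _ _ w; rewrite /FD.
have cong : forall F G : R * R -> quat R, (forall x, F x = G x) -> qint F = qint G.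
  by move=> F G FG; congr qint; apply: funext.
split; apply: cong => x;
  set a := (x.1 * w.1 + x.2 * w.2) / 2; set b := (x.1 * w.1 - x.2 * w.2) / 2.
- have -> : x.2 * w.2 = a + - b by rewrite /a /b; field.
  rewrite -Ladd // -qmulA.
  have -> : qmul (qexp f (- a)) (hplus f g h x) = qmul (hplus f g h x) (qexp g a).
    rewrite Lleft Lright /hplus Kplus // cosN sinN.
    move: (qmul (qscale _ _) g) => Y; qdes; congr Quat; ring.
  by [].
- have -> : - (x.2 * w.2) = - a + b by rewrite /a /b; field.
  rewrite -Ladd // qmulA.
  have -> : qmul (hplus f g h x) (qexp g (- b)) = qmul (qexp f b) (hplus f g h x).
    rewrite Lleft Lright /hplus Kplus // cosN sinN.
    move: (qmul (qscale _ _) g) => Y; qdes; congr Quat; ring.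
  by rewrite qmulA.
- have -> : - (x.1 * w.1) = - a + - b by rewrite /a /b; field.
  rewrite -Ladd // -qmulA.
  have -> : qmul (qexp f (- a)) (hminus f g h x) = qmul (hminus f g h x) (qexp g (- a)).
    rewrite Lleft Lright /hminus Kminus // !cosN !sinN.
  by [].
- have -> : - (x.1 * w.1) = - a + - b by rewrite /a /b; field.
  rewrite -Ladd // qmulA.
  have -> : qmul (hminus f g h x) (qexp g (- b)) = qmul (qexp f (- b)) (hminus f g h x).
    rewrite Lleft Lright /hminus Kminus // !cosN !sinN.
  by rewrite qmulA.
Qed.
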